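(* The class $\mathcal S^*$ has the expansion property relative to the class $\mathcal S$.
   Context: Expansion property: let $L\subseteq L^*$ be relational languages, $\mathcal K$ a class of finite $L$-structures and $\mathcal K^*$ a class of finite $L^*$-structures whose $L$-reducts lie in $\mathcal K$. $\mathcal K^*$ has the expansion property relative to $\mathcal K$ if for every $\mathbf A\in\mathcal K$ there is $\mathbf B\in\mathcal K$ such that for all $\mathbf A^*,\mathbf B^*\in\mathcal K^*$ whose $L$-reducts are $\mathbf A$ and $\mathbf B$ respectively, $\mathbf A^*$ embeds into $\mathbf B^*$. A directed graph $(A,E)$ is complete multipartite if the relation ''$u=v$, or neither $E(u,v)$ nor $E(v,u)$'' is an equivalence relation on $A$; its classes are the parts. $\mathcal S$ is the class of finite complete multipartite directed graphs satisfying the parity constraint: for any two distinct parts $P,P'$, distinct $u,v\in P$ and distinct $x,y\in P'$, the number of edges directed from $\{u,v\}$ to $\{x,y\}$ is even. $\mathcal S^*$ is the class of structures $(A,E,R,<)$ ($R,<$ binary) obtained as follows: $\mathbf A=(A,E)\in\mathcal S$ has $k$ parts; choose $\bar{\mathbf A}=(\bar A,\bar E)\in\mathcal S$ with $k$ parts, containing $\mathbf A$ as an induced substructure, and containing a set $\{t_0,\dots,t_{k-1}\}$ disjoint from $A$ with exactly one $t_i$ in each part of $\bar{\mathbf A}$ and $\bar E(t_i,t_j)$ whenever $i<j$; set $R(x,u)$ iff $x,u\in A$ lie in different parts and $\bar E(t,u)$, where $t$ is the $t_i$ lying in the part of $x$; and let $<$ be the restriction to $A$ of a linear order on $\bar A$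 in which every part of $\bar{\mathbf A}$ is an interval and $t_0<t_1<\dots<t_{k-1}$. *)

(* Defs.v *)
From mathcomp Require Import all_boot.
Set Implicit Arguments. Unset Strict Implicit. Unset Printing Implicit Defensive.

Definition digraph (T : finType) (E : rel T) : Prop :=
  (forall x, ~~ E x x) /\ (forall x y, E x y -> ~~ E y x).

Definition sameP (T : finType) (E : rel T) : rel T :=
  fun u v => (u == v) || (~~ E u v && ~~ E v u).

(* complete multipartite: sameP is an equivalence relation
   (reflexivity and symmetry hold by definition, we state all three) *)
Definition complete_multipartite (T : finType) (E : rel T) : Prop :=
  digraph E /\
  (forall u, sameP E u u) /\
  (forall u v, sameP E u v -> sameP E v u) /\
  (forall u v w, sameP E u v -> sameP E v w -> sameP E u w).

Definition nparts (T : finType) (E : rel T) : nat :=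
  #|[set [set y | sameP E x y] | x : T]|.

Definition parity_ok (T : finType) (E : rel T) : Prop :=
  forall u v x y : T,
    ~~ sameP E u x -> sameP E u v -> sameP E x y -> u != v -> x != y ->
    ~~ odd (E u x + E u y + E v x + E v y).

Definition inS (T : finType) (E : rel T) : Prop :=
  complete_multipartite E /\ parity_ok E.

Definition strict_linear (T : finType) (lt : rel T) : Prop :=
  (forall x, ~~ lt x x) /\
  (forall x y z, lt x y -> lt y z -> lt x z) /\
  (forall x y, x != y -> lt x y || lt y x).

Definition inSstar (T : finType) (E R Lt : rel T) : Prop :=
  inS E /\
  exists (Tb : finType) (Eb : rel Tb) (f : T -> Tb)
         (t : 'I_(nparts E) -> Tb) (ltb : rel Tb),
    inS Eb /\ nparts Eb = nparts E /\
    (injective f /\ (forall x y, E x y = Eb (f x) (f y))) /\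
    (forall i x, t i != f x) /\
    (forall y, exists i, sameP Eb (t i) y /\
                    (forall j, sameP Eb (t j) y -> j = i)) /\
    (forall i j : 'I_(nparts E), (i < j)%N -> Eb (t i) (t j)) /\
    strict_linear ltb /\
    (forall a b c, sameP Eb a c -> ltb a b -> ltb b c -> sameP Eb a b) /\
    (forall i j : 'I_(nparts E), (i < j)%N -> ltb (t i) (t j)) /\
    (forall x u, R x u <->
            (~~ sameP E x u /\
             exists i, sameP Eb (t i) (f x) /\ Eb (t i) (f u))) /\
    (forall x y, Lt x y = ltb (f x) (f y)).

Definition embeds_star (A B : finType) (EA RA LA : rel A) (EB RB LB : rel B) : Prop :=
  exists g : A -> B, injective g /\
    forall x y, EA x y = EB (g x) (g y) /\ RA x y = RB (g x) (g y) /\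
                LA x y = LB (g x) (g y).

Definition expansion_property_S : Prop :=
  forall (A : finType) (EA : rel A), inS EA ->
    exists (B : finType) (EB : rel B), inS EB /\
      forall (RA LA : rel A) (RB LB : rel B),
        inSstar EA RA LA -> inSstar EB RB LB ->
        embeds_star EA RA LA EB RB LB.

(* Main.v *)
Require Import Defs.
From mathcomp Require Import all_boot zify.
Set Implicit Arguments. Unset Strict Implicit. Unset Printing Implicit Defensive.

Section Rank.
Variable T : finType.
Variable ord : rel T.
Hypothesis Hord : strict_linear ord.

Definition rank (W : {set T}) (w : T) := #|[set v in W | ord v w]|.

Lemma ord_irr x : ~~ ord x x.
Proof. by case: Hord. Qed.
Lemma ord_trans x y z : ord x y -> ord y z -> ord x z.
Proof. by case: Hord => _ [H _]; apply: H. Qed.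
Lemma ord_tot x y : x != y -> ord x y || ord y x.
Proof. by case: Hord => _ [_ H]; apply: H. Qed.
Lemma ord_asym x y : ord x y -> ~~ ord y x.
Proof. move=> H; apply/negP => H'; by have := ord_irr x; rewrite (ord_trans H H'). Qed.

Lemma rank_lt (W : {set T}) v w : v \in W -> ord v w -> rank W v < rank W w.
Proof.
move=> vW vw; rewrite /rank; apply: proper_card; apply/properP; split.
  apply/subsetP => u; rewrite !inE => /andP[-> uv] /=; exact: ord_trans uv vw.
by exists v; rewrite !inE ?vW ?vw // (negbTE (ord_irr v)) andbF.
Qed.

Lemma rank_ord (W : {set T}) v w : v \in W -> w \in W -> rank W v < rank W w -> ord v w.
Proof.
move=> vW wW H; case: (eqVneq v w) => [vw|nvw]; first by move: H; rewrite vw ltnn.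
case/orP: (ord_tot nvw) => // wv; have := rank_lt wW wv.
by rewrite ltnNge (ltnW H).
Qed.

Lemma rank_inj (W : {set T}) v w : v \in W -> w \in W -> rank W v = rank W w -> v = w.
Proof.
move=> vW wW H; case: (eqVneq v w) => // nvw.
by case/orP: (ord_tot nvw) => [/(rank_lt vW)|/(rank_lt wW)]; rewrite H ltnn.
Qed.

Lemma rank_bound (W : {set T}) w : w \in W -> rank W w < #|W|.
Proof.
move=> wW; apply: proper_card; apply/properP; split.
  by apply/subsetP => u; rewrite inE => /andP[].
by exists w => //; rewrite inE (negbTE (ord_irr w)) andbF.
Qed.
End Rank.

Section Cube.
Variable N : nat.
Notation D := 'I_N.
Notation V := {ffun 'I_N -> bool}.
Variable ord : rel V.
Hypothesis Hord : strict_linear ord.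

Definition univb (R : nat) (Y : {set D}) (W : {set V}) : bool :=
  [forall J : {set D}, (J \subset Y) ==> (#|J| <= R) ==>
     [forall a : V, [exists w in W, [forall l in J, w l == a l]]]].

Lemma univP (R : nat) (Y : {set D}) (W : {set V}) : univb R Y W -> forall J : {set D}, J \subset Y -> #|J| <= R ->
  forall a : V, exists2 w, w \in W & forall l, l \in J -> w l = a l.
Proof.
move=> /forallP H J JY JR a; move: (H J); rewrite JY JR /= => /forallP/(_ a).
case/existsP => w /andP[wW /forallP Hw]; exists w => // l lJ.
by have := Hw l; rewrite lJ /= => /eqP.
Qed.

Lemma univI (R : nat) (Y : {set D}) (W : {set V}) : (forall J : {set D}, J \subset Y -> #|J| <= R ->
  forall a : V, exists2 w, w \in W & forall l, l \in J -> w l = a l) -> univb R Y W.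
Proof.
move=> H; apply/forallP => J; apply/implyP => JY; apply/implyP => JR.
apply/forallP => a; have [w wW Hw] := H J JY JR a; apply/existsP; exists w.
by rewrite wW /=; apply/forallP => l; apply/implyP => lJ; rewrite Hw.
Qed.

Lemma univPn (R : nat) (Y : {set D}) (W : {set V}) : ~~ univb R Y W -> exists (J : {set D}) (a : V),
  [/\ J \subset Y, #|J| <= R & forall w, w \in W -> exists2 l, l \in J & w l != a l].
Proof.
move=> H; case: (boolP [exists J : {set D}, [exists a : V, (J \subset Y) && (#|J| <= R) &&
   [forall w in W, [exists l in J, w l != a l]]]]).
  case/existsP => J /existsP [a /andP[/andP[JY JR] /forallP Hw]].
  exists J, a; split => // w wW; move: (Hw w); rewrite wW /= => /existsP [l /andP[lJ Hl]].
  by exists l.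
rewrite negb_exists => /forallP Hn; case/negP: H; apply: univI => J JY JR a.
move: (Hn J); rewrite negb_exists => /forallP/(_ a); rewrite JY JR /=.
rewrite negb_forall => /existsP [w]; rewrite negb_imply negb_exists => /andP[wW /forallP Hl].
exists w => // l lJ; move: (Hl l); rewrite lJ /= negbK => /eqP; done.
Qed.

Lemma univ_mon (R R' : nat) (Y Y' : {set D}) (W : {set V}) : R' <= R -> Y' \subset Y -> univb R Y W -> univb R' Y' W.
Proof.
move=> RR YY /univP H; apply: univI => J JY JR a; apply: H => //.
  exact: subset_trans YY. exact: leq_trans RR.
Qed.

Definition seg (W : {set V}) n := [set w in W | rank ord W w < n].

Lemma seg_full (W : {set V}) : seg W #|W| = W.
Proof.
apply/setP => w; rewrite inE; case wW: (w \in W) => //=; exact: rank_bound.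
Qed.

Lemma split (R' : nat) (Y : {set D}) (W : {set V}) : univb R'.*2.+1 Y W -> R' < #|Y| ->
  exists (X : {set D}) (W1 W2 : {set V}), [/\ #|X| <= R'.+1, W1 \subset W /\ W2 \subset W, univb R' Y W1, univb R' (Y :\: X) W2 &
     forall w1 w2, w1 \in W1 -> w2 \in W2 -> ord w1 w2].
Proof.
move=> HU HY.
pose P n := univb R' Y (seg W n).
have Pex : exists n, P n.
  exists #|W|; rewrite /P seg_full; apply: univ_mon HU => //.
  by apply: leq_trans (leqnSn _); rewrite -addnn leq_addl.
case: (ex_minnP Pex) => n Pn Hmin.
case: n Pn Hmin => [|n'] Pn Hmin.
  have [w] := univP Pn (sub0set Y) ltac:(by rewrite cards0) [ffun _ => false].
  by rewrite inE ltn0 andbF.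
have nP : ~~ P n' by apply/negP => H; have := Hmin _ H; rewrite ltnn.
case: (univPn nP) => J0 [a0 [J0Y J0R Hw]].
have [c cS Hc] := univP Pn J0Y J0R a0.
have : 0 < #|Y :\: J0|.
  rewrite cardsD subn_gt0; apply: leq_ltn_trans HY.
  apply: leq_trans J0R; apply: subset_leq_card; exact: subsetIr.
case/card_gt0P => y; rewrite inE => /andP[yJ0 yY].
exists (y |: J0), (seg W n'.+1), [set w in W | [forall l in J0, w l == a0 l] && (w y != c y)].
split => //.
- by rewrite cardsU1 yJ0 add1n ltnS.
- by split; apply/subsetP => w; rewrite inE => /andP[].
- apply: univI => J JY JR a.
  pose J' := J :|: (y |: J0).
  pose a' := [ffun l => if l \in J then a l else if l \in J0 then a0 l else ~~ c y].
  have JnX l : l \in J -> l \notin y |: J0.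
    by move=> lJ; move: (subsetP JY l lJ); rewrite inE => /andP[].
  have J'Y : J' \subset Y.
    rewrite subUset (subset_trans JY (subsetDl _ _)) /= subUset sub1set yY /=; exact: J0Y.
  have J'R : #|J'| <= R'.*2.+1.
    apply: leq_trans (leq_card_setU J (y |: J0)).1 _.
    by rewrite -addnn -addnS leq_add // cardsU1 yJ0 add1n ltnS.
  have [w wW Hw'] := univP HU J'Y J'R a'.
  exists w.
    rewrite inE wW /=; apply/andP; split.
      apply/forallP => l; apply/implyP => lJ0.
      rewrite Hw'; last by rewrite !inE lJ0 !orbT.
      rewrite ffunE; case: ifP => [lJ|_]; last by rewrite lJ0.
      by move: (JnX l lJ); rewrite !inE lJ0 orbT.
    rewrite Hw'; last by rewrite !inE eqxx orbT.
    rewrite ffunE; case: ifP => [yJ|_]; first by move: (JnX y yJ); rewrite !inE eqxx.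
    by rewrite (negbTE yJ0); case: (c y).
  move=> l lJ; rewrite Hw'; last by rewrite inE lJ.
  by rewrite ffunE lJ.
- move=> w1 w2; rewrite /seg !inE => /andP[w1W r1] /andP[w2W /andP[/forallP Hm w2y]].
  have nseg w : w \in W -> (forall l, l \in J0 -> w l = a0 l) -> n' <= rank ord W w.
    move=> wW Hwl; rewrite leqNgt; apply/negP => H.
    have [l lJ0] := Hw w ltac:(by rewrite inE wW H).
    by rewrite Hwl // eqxx.
  move: cS; rewrite inE => /andP[cW rc].
  have rcn : rank ord W c = n' by apply/eqP; rewrite eqn_leq -ltnS rc nseg.
  have r2 : n' < rank ord W w2.
    rewrite ltn_neqAle nseg // ?andbT.
      apply/eqP => H; move: w2y; rewrite (rank_inj Hord w2W cW) ?eqxx //.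
      by rewrite -H rcn.
    by move=> l lJ0; apply/eqP; move: (Hm l); rewrite lJ0.
  exact: (rank_ord Hord w1W w2W (leq_trans r1 r2)).
Qed.

Fixpoint Rf (r S : nat) : nat := if S is S'.+1 then (Rf r S').*2.+1 else r.
Fixpoint xf (r S : nat) : nat := if S is S'.+1 then (Rf r S').+1 + xf r S' else 0.

Lemma Rf_ge r S : r <= Rf r S.
Proof.
elim: S => //= S IH; apply: leq_trans IH _; apply: leq_trans (leqnSn _).
by rewrite -addnn leq_addl.
Qed.

Lemma chain r S : forall (Y : {set D}) (W : {set V}), univb (Rf r S) Y W -> xf r S <= #|Y| ->
  exists X : {set D}, #|X| <= xf r S /\ forall J : {set D}, J \subset Y :\: X -> #|J| <= r ->
   forall T : nat -> D -> bool, exists w : nat -> V,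
     (forall s, s < S -> w s \in W /\ forall l, l \in J -> w s l = T s l) /\
     (forall s, s.+1 < S -> ord (w s) (w s.+1)).
Proof.
elim: S => [|S IH] Y W HU HY.
  exists set0; split; first by rewrite cards0.
  by move=> J _ _ T; exists (fun _ => [ffun _ => false]).
have HY' : Rf r S < #|Y| by apply: leq_trans HY; rewrite /= addSn ltnS leq_addr.
have [X1 [W1 [W2 [X1c [W1W W2W] HW1 HW2 Ho]]]] := split HU HY'.
have HY2 : xf r S <= #|Y :\: X1|.
  rewrite cardsD leq_subRL; last by apply: subset_leq_card; exact: subsetIl.
  apply: leq_trans HY; rewrite /= leq_add //; apply: leq_trans X1c.
  apply: subset_leq_card; exact: subsetIr.
have [X2 [X2c HX2]] := IH _ _ HW2 HY2.
exists (X1 :|: X2); split.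
  apply: leq_trans (leq_card_setU X1 X2).1 _; exact: leq_add.
move=> J JY JR T.
have JY1 : J \subset Y by apply: subset_trans JY (subsetDl _ _).
have JY2 : J \subset (Y :\: X1) :\: X2.
  apply/subsetP => l lJ; move: (subsetP JY l lJ); rewrite !inE negb_or.
  by case/andP => /andP[-> ->] ->.
have [w1 w1W Hw1] := univP HW1 JY1 (leq_trans JR (Rf_ge r S)) [ffun l => T 0 l].
have [w [Hw Hch]] := HX2 J JY2 JR (fun s => T s.+1).
exists (fun s => if s is s'.+1 then w s' else w1); split.
  case=> [|s] Hs.
    split; first exact: (subsetP W1W).
    by move=> l lJ; rewrite Hw1 // ffunE.
  by have [Hm Hl] := Hw s Hs; split => //; exact: (subsetP W2W).
case=> [|s] Hs; last exact: Hch.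
apply: Ho => //; by have [] := Hw 0 Hs.
Qed.
End Cube.

Lemma card_sum (T : finType) (U : {set T}) (P : pred T) :
  #|[set q' in U | P q']| = \sum_(q' in U) (P q' : nat).
Proof.
rewrite -sum1dep_card big_mkcondr /=; apply: eq_bigr => i _.
by case: (P i).
Qed.

Lemma indep (T : finType) (f : T -> {set T}) (x : nat) : (forall q, #|f q| <= x) ->
  forall k (U : {set T}), k * (x.*2.+1) <= #|U| -> exists C : {set T},
   [/\ C \subset U, #|C| = k & forall q q', q \in C -> q' \in C -> q' \in f q -> q' = q].
Proof.
move=> Hf; elim=> [|k IH] U HU.
  exists set0; split; [exact: sub0set | exact: cards0 | by move=> q q'; rewrite inE].
have U0 : 0 < #|U| by apply: leq_trans HU; rewrite mulSn addSn.
have [q qU Hq] : exists2 q, q \in U & #|[set q' in U | q \in f q']| <= x.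
  case: (boolP [exists q in U, #|[set q' in U | q \in f q']| <= x]).
    by case/existsP => q /andP[qU Hq]; exists q.
  rewrite negb_exists => /forallP Hn; exfalso.
  have H1 : #|U| * x.+1 <= \sum_(q in U) #|[set q' in U | q \in f q']|.
    rewrite -sum_nat_const; apply: leq_sum => q qU.
    by move: (Hn q); rewrite qU /= -ltnNge.
  have H2 : \sum_(q in U) #|[set q' in U | q \in f q']| <= #|U| * x.
    rewrite (eq_bigr (fun q => \sum_(q' in U) (q \in f q' : nat))); last first.
      by move=> q _; rewrite card_sum.
    rewrite exchange_big /= -sum_nat_const; apply: leq_sum => q' _.
    rewrite -card_sum; apply: leq_trans (Hf q').
    by apply: subset_leq_card; apply/subsetP => z; rewrite inE => /andP[].
  by have := leq_trans H1 H2; rewrite leq_pmul2l // ltnn.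
pose U' := U :\: (q |: (f q :|: [set q' in U | q \in f q'])).
have HU' : k * (x.*2.+1) <= #|U'|.
  have HI : #|U :&: (q |: (f q :|: [set q' in U | q \in f q']))| <= x.*2.+1.
    apply: leq_trans (subset_leq_card (subsetIr _ _)) _.
    apply: leq_trans (leq_card_setU _ _).1 _; rewrite cards1 add1n ltnS -addnn.
    apply: leq_trans (leq_card_setU _ _).1 _; exact: leq_add.
  rewrite /U' cardsD; move: HU HI; rewrite mulSn; lia.
have [C' [C'U C'c HC']] := IH U' HU'.
have qC' : q \notin C'.
  by apply/negP => /(subsetP C'U); rewrite inE setU11.
exists (q |: C'); split.
- by rewrite subUset sub1set qU (subset_trans C'U) // subsetDl.
- by rewrite cardsU1 qC' C'c.
move=> a b; rewrite !inE => /predU1P[->|aC] /predU1P[->|bC] // Hb.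
- by move: (subsetP C'U b bC); rewrite !inE Hb /= orbT.
- by move: (subsetP C'U a aC); rewrite !inE Hb !andbT => /andP[/norP[_ /norP[_ ]]] /negP.
- exact: HC'.
Qed.

Notation sP := Defs.sameP.

Record absS (T : finType) (E R Lt : rel T) (k : nat) (p : T -> 'I_k)
   (rho : 'I_k -> T -> bool) : Prop := AbsS {
 a_same : forall x u, sP E x u = (p x == p u);
 a_R : forall x u, R x u = (p x != p u) && rho (p x) u;
 a_E : forall x u, p x != p u -> E x u = ~~ rho (p u) x (+) rho (p x) u (+) (p x < p u);
 a_Esame : forall x u, p x = p u -> E x u = false;
 a_Lt : forall x u, p x != p u -> Lt x u = (p x < p u);
 a_lin : strict_linear Lt }.

Section InS.
Variable Tb : finType.
Variable Eb : rel Tb.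
Hypothesis HS : inS Eb.

Lemma sP_refl a : sP Eb a a.
Proof. by case: HS => [[_ [H _]] _]. Qed.
Lemma sP_sym a b : sP Eb a b -> sP Eb b a.
Proof. by case: HS => [[_ [_ [H _]]] _]; apply: H. Qed.
Lemma sP_trans a b c : sP Eb a b -> sP Eb b c -> sP Eb a c.
Proof. by case: HS => [[_ [_ [_ H]]] _]; apply: H. Qed.
Lemma E_irr a : Eb a a = false.
Proof. by case: HS => [[[H _] _] _]; apply/negbTE. Qed.
Lemma E_asym a b : Eb a b -> ~~ Eb b a.
Proof. by case: HS => [[[_ H] _] _]; apply: H. Qed.
Lemma E_same a b : sP Eb a b -> Eb a b = false.
Proof.
rewrite /Defs.sameP; case/orP => [/eqP->|/andP[H _]]; [exact: E_irr | exact: negbTE].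
Qed.
Lemma E_nsame a b : ~~ sP Eb a b -> Eb a b = ~~ Eb b a.
Proof.
rewrite /Defs.sameP negb_or => /andP[_]; rewrite negb_and !negbK.
case/orP => H; first by rewrite H; move/E_asym: H => /negbTE->.
by rewrite H (negbTE (E_asym H)).
Qed.
Lemma E_par a b c d : ~~ sP Eb a c -> sP Eb a b -> sP Eb c d -> a != b -> c != d ->
  Eb a c = Eb a d (+) Eb b c (+) Eb b d.
Proof.
move=> h1 h2 h3 h4 h5; case: HS => _ /(_ a b c d h1 h2 h3 h4 h5).
rewrite !oddD !oddb.
by case: (Eb a c); case: (Eb a d); case: (Eb b c); case: (Eb b d).
Qed.

Variable ltb : rel Tb.
Hypothesis Hlt : strict_linear ltb.
Hypothesis Hint : forall a b c, sP Eb a c -> ltb a b -> ltb b c -> sP Eb a b.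

Lemma lt_transfer a b a' b' : ltb a b -> ~~ sP Eb a b -> sP Eb a a' -> sP Eb b b' ->
  ltb a' b'.
Proof.
move=> ab nab aa' bb'.
have na'b : a' != b.
  apply/eqP => E1; move: nab; by rewrite -E1 aa'.
have a'b : ltb a' b.
  case/orP: (ord_tot Hlt na'b) => // ba'.
  by move: nab; rewrite (Hint aa' ab ba').
have na'b' : a' != b'.
  apply/eqP => E1; move: nab; rewrite (sP_trans aa' _) //; by rewrite E1 sP_sym.
case/orP: (ord_tot Hlt na'b') => // b'a'.
have := Hint (sP_sym bb') b'a' a'b => Hb'a'.
move: nab; rewrite (sP_trans aa' (sP_trans (sP_sym Hb'a') (sP_sym bb'))) //.
Qed.
End InS.


Lemma abs_of_star (T : finType) (E R Lt : rel T) : inSstar E R Lt ->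
  exists p rho, @absS T E R Lt (nparts E) p rho.
Proof.
case=> HS [Tb [Eb [f [t [ltb [HSb [Hk [[finj fE] [tf [tpart [tE [ltlin [ltint [tlt [HR HLt]]]]]]]]]]]]]]].
have [pb Hpb] := fin_all_exists tpart.
pose p x := pb (f x).
pose rho i x := Eb (t i) (f x).
have tuniq i y : sP Eb (t i) y -> i = pb y.
  by move=> H; case: (Hpb y) => _ /(_ i H).
have sPf x u : sP E x u = sP Eb (f x) (f u).
  by rewrite /Defs.sameP !fE (inj_eq finj).
have tpx x : sP Eb (f x) (t (p x)) by apply: (sP_sym HSb); exact: (proj1 (Hpb (f x))).
have psame x u : sP E x u = (p x == p u).
  rewrite sPf; apply/idP/eqP => [H|H].
    apply: tuniq. exact: (sP_trans HSb (sP_sym HSb (tpx x)) H).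
  have H2 := (sP_sym HSb (tpx u)).
  rewrite /p in H; have H1 := tpx x; rewrite /p H in H1.
  exact: (sP_trans HSb H1 H2).
exists p, rho; split.
- exact: psame.
- move=> x u; apply/idP/idP.
    move/HR => [ns [i [Hi Ei]]]; rewrite -psame ns /=.
    by rewrite /rho /p -(tuniq _ _ Hi).
  case/andP => ns Hr; apply/HR; split; first by rewrite psame.
  by exists (p x); split => //; apply: (sP_sym HSb); exact: tpx.
- move=> x u npxu.
  have nsxu : ~~ sP Eb (f x) (f u) by rewrite -sPf psame.
  rewrite fE (E_par HSb nsxu (tpx x) (tpx u)); last 2 first.
    by rewrite eq_sym tf. by rewrite eq_sym tf.
  have ns1 : ~~ sP Eb (f x) (t (p u)).
    apply/negP => H; move: npxu; rewrite (tuniq (p u) (f x)) ?eqxx //.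
    exact: (sP_sym HSb H).
  rewrite (E_nsame HSb ns1) /rho.
  have -> : Eb (t (p x)) (t (p u)) = (p x < p u).
    case: (ltngtP (p x) (p u)) => [H|H|/val_inj H]; last by rewrite H eqxx in npxu.
      exact: tE.
    have ns2 : ~~ sP Eb (t (p x)) (t (p u)).
      apply/negP => H'; move: npxu; rewrite (tuniq _ _ H').
      by rewrite -(tuniq _ _ (sP_refl HSb (t (p u)))) eqxx.
    by rewrite (E_nsame HSb ns2) tE.
  by case: (Eb (t (p u)) (f x)); case: (Eb (t (p x)) (f u)); case: (p x < p u).
- move=> x u Hp; rewrite fE; apply: (E_same HSb).
  by rewrite -sPf psame Hp.
- move=> x u npxu; rewrite HLt.
  have nsxu : ~~ sP Eb (f x) (f u) by rewrite -sPf psame.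
  have ns2 : ~~ sP Eb (t (p x)) (t (p u)).
    apply/negP => H'; apply: (negP nsxu).
    exact: (sP_trans HSb (tpx x) (sP_trans HSb H' (sP_sym HSb (tpx u)))).
  case: (ltngtP (p x) (p u)) => [H|H|/val_inj H]; last by rewrite H eqxx in npxu.
    exact: (lt_transfer HSb ltlin ltint (tlt _ _ H) ns2 (sP_sym HSb (tpx _)) (sP_sym HSb (tpx _))).
  apply/negP => H'.
  have H2 := lt_transfer HSb ltlin ltint H' nsxu (tpx x) (tpx u).
  have H3 := tlt _ _ H.
  by have := ord_asym ltlin H2; rewrite H3.
- case: ltlin => [irr [tr tot]]; split; [|split].
  + by move=> x; rewrite HLt.
  + by move=> x y z; rewrite !HLt; apply: tr.
  + by move=> x y nxy; rewrite !HLt; apply: tot; rewrite (inj_eq finj).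
Qed.

Lemma embed_abs (A B : finType) (EA RA LA : rel A) (EB RB LB : rel B) kA pA rhoA kB pB rhoB :
 @absS A EA RA LA kA pA rhoA -> @absS B EB RB LB kB pB rhoB ->
 forall (g : A -> B) (phi : 'I_kA -> 'I_kB),
 injective g ->
 (forall i j : 'I_kA, i < j -> phi i < phi j) ->
 (forall x, pB (g x) = phi (pA x)) ->
 (forall x l, l != pA x -> rhoB (phi l) (g x) = rhoA l x) ->
 (forall x u, pA x = pA u -> LA x u = LB (g x) (g u)) ->
 embeds_star EA RA LA EB RB LB.
Proof.
move=> HA HB g phi ginj phimon pg rg Lg.
have philt i j : (phi i < phi j) = (i < j).
  case: (ltngtP i j) => [H|H|/val_inj->]; first by rewrite phimon.
    by apply/negbTE; rewrite -leqNgt ltnW // phimon.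
  by rewrite ltnn.
have phieq i j : (phi i == phi j) = (i == j).
  apply/eqP/eqP => [H|->] //.
  case: (ltngtP i j) => [/phimon|/phimon|/val_inj] //; by rewrite H ltnn.
exists g; split => // x u.
case: (eqVneq (pA x) (pA u)) => [Hp|Hp].
  have HpB : pB (g x) = pB (g u) by rewrite !pg Hp.
  rewrite (a_Esame HA Hp) (a_Esame HB HpB) (a_R HA) (a_R HB) Hp HpB !eqxx /=.
  by split => //; split => //; exact: Lg.
have HpB : pB (g x) != pB (g u) by rewrite !pg phieq.
rewrite (a_E HA Hp) (a_E HB HpB) (a_R HA) (a_R HB) (a_Lt HA Hp) (a_Lt HB HpB).
rewrite !pg philt Hp phieq Hp /= (rg x (pA u)) ?(rg u (pA x)) //.
by rewrite eq_sym.
Qed.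

Section BDef.
Variable N : nat.
Definition BT := ('I_N * {ffun 'I_N -> bool})%type.
Definition EBr : rel BT := fun a b => (a.1 != b.1) && (a.2 b.1 (+) b.2 a.1 (+) (a.1 < b.1)).

Lemma sP_EB a b : sP EBr a b = (a.1 == b.1).
Proof.
case: a b => q y [q' z]; rewrite /Defs.sameP /EBr /=.
case: (eqVneq q q') => [<-|nqq] /=; first by rewrite orbT.
rewrite xpair_eqE (negbTE nqq) /=.
case: (ltngtP q q') => [H|H|/val_inj H]; last by rewrite H eqxx in nqq.
  by case: (y q'); case: (z q).
by case: (y q'); case: (z q).
Qed.

Lemma inS_EB : inS EBr.
Proof.
split; first split.
- split; first by case=> q y; rewrite /EBr /= eqxx.
  case=> q y [q' z]; rewrite /EBr /= => /andP[nqq H].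
  rewrite eq_sym nqq /=.
  case: (ltngtP q q') H => [H|H|/val_inj H]; last by rewrite H eqxx in nqq.
    by case: (y q'); case: (z q).
  by case: (y q'); case: (z q).
- split; first by move=> u; rewrite sP_EB.
  split; first by move=> u v; rewrite !sP_EB eq_sym.
  by move=> u v w; rewrite !sP_EB => /eqP-> /eqP->.
- case=> q1 u [q2 v] [q3 x] [q4 y]; rewrite !sP_EB /= => nq13 /eqP<- /eqP<- _ _.
  rewrite /EBr /= nq13 /= !oddD !oddb.
  by case: (u q3); case: (v q3); case: (x q1); case: (y q1); case: (q1 < q3).
Qed.
End BDef.

Lemma sorted_enum_ord K (S : {set 'I_K}) : sorted (fun a b : 'I_K => a < b) (enum S).
Proof.
rewrite /enum_mem -enumT. apply: sorted_filter. move=> a b c; exact: ltn_trans.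
have := iota_ltn_sorted 0 K. rewrite -val_enum_ord sorted_map. by [].
Qed.

Lemma chain_trans (T : finType) (ord : rel T) (Hord : strict_linear ord) (w : nat -> T) S :
  (forall s, s.+1 < S -> ord (w s) (w s.+1)) ->
  forall s s', s < s' -> s' < S -> ord (w s) (w s').
Proof.
move=> H s; elim=> // s' IH; rewrite ltnS leq_eqVlt => /orP[/eqP<-|lt] HS.
  exact: H.
exact: (ord_trans Hord (IH lt (ltnW HS)) (H _ HS)).
Qed.

Lemma chain_ord (T : finType) (ord : rel T) (Hord : strict_linear ord) (w : nat -> T) S :
  (forall s, s.+1 < S -> ord (w s) (w s.+1)) ->
  forall s s', s < S -> s' < S -> ord (w s) (w s') = (s < s').
Proof.
move=> H s s' hs hs'; case: (ltngtP s s') => [lt|lt|->].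
- exact: (chain_trans Hord H lt hs').
- apply/negbTE; exact: (ord_asym Hord (chain_trans Hord H lt hs)).
- exact/negbTE/ord_irr.
Qed.

Section Main.
Variable A : finType.
Variables (EA RA LA : rel A) (kA : nat) (pA : A -> 'I_kA) (rhoA : 'I_kA -> A -> bool).
Hypothesis HA : absS EA RA LA pA rhoA.
Hypothesis HkA : kA <= #|A|.
Variable N : nat.
Hypothesis HN : #|A|.+1 * (xf #|A| #|A|).*2.+1 <= N.
Lemma N0 : 0 < N.
Proof. by apply: leq_trans HN. Qed.
Variables (RB LB : rel (BT N)) (kB : nat) (pB : BT N -> 'I_kB) (rhoB : 'I_kB -> BT N -> bool).
Hypothesis HB : absS (@EBr N) RB LB pB rhoB.

Notation V := {ffun 'I_N -> bool}.
Definition y0 : V := [ffun _ => false].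
Definition q0 : 'I_N := Ordinal N0.
Definition pi (q : 'I_N) := pB (q, y0).

Lemma pB_q q y : pB (q, y) = pi q.
Proof. by apply/eqP; rewrite -(a_same HB) sP_EB. Qed.

Lemma pi_inj : injective pi.
Proof.
move=> q q' H; have : sP (@EBr N) (q, y0) (q', y0) by rewrite (a_same HB); apply/eqP.
by rewrite sP_EB => /eqP.
Qed.

Definition e q q' := rhoB (pi q') (q, y0).

Lemma rhoB_q q q' y : q != q' -> rhoB (pi q') (q, y) = y q' (+) e q q'.
Proof.
move=> nqq.
have np : pB (q, y) != pB (q', y0) by rewrite !pB_q (inj_eq pi_inj).
have np0 : pB (q, y0) != pB (q', y0) by rewrite !pB_q (inj_eq pi_inj).
have H1 := a_E HB np; have H2 := a_E HB np0.
move: H1 H2; rewrite /EBr /= nqq !pB_q /e /y0 !ffunE /=.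
by case: (rhoB (pi q') (q, y)); case: (rhoB (pi q') (q, [ffun _ => false]));
   case: (rhoB (pi q) (q', [ffun _ => false])); case: (y q'); case: (q < q'); case: (pi q < pi q').
Qed.

Definition ordq q : rel V := fun y y' => LB (q, y) (q, y').

Lemma ordq_lin q : strict_linear (ordq q).
Proof.
case: (a_lin HB) => irr [tr tot]; split; [|split].
- by move=> y; exact: irr.
- by move=> x y z; exact: tr.
- move=> y y' nyy; apply: tot; by rewrite xpair_eqE eqxx.
Qed.

Lemma univT R : univb R [set: 'I_N] [set: V].
Proof. by apply: univI => J _ _ a; exists a. Qed.

Lemma Xex q : exists X : {set 'I_N}, #|X| <= xf #|A| #|A| /\
  forall J : {set 'I_N}, J \subset [set: 'I_N] :\: X -> #|J| <= #|A| ->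
   forall T : nat -> 'I_N -> bool, exists w : nat -> V,
     (forall s, s < #|A| -> w s \in [set: V] /\ forall l, l \in J -> w s l = T s l) /\
     (forall s, s.+1 < #|A| -> ordq q (w s) (w s.+1)).
Proof.
apply: (chain (ordq_lin q) (univT _)).
rewrite cardsT card_ord; apply: leq_trans HN; nia.
Qed.

Variable Xf : 'I_N -> {set 'I_N}.
Hypothesis HXf : forall q, forall J : {set 'I_N}, J \subset [set: 'I_N] :\: Xf q -> #|J| <= #|A| ->
   forall T : nat -> 'I_N -> bool, exists w : nat -> V,
     (forall s, s < #|A| -> w s \in [set: V] /\ forall l, l \in J -> w s l = T s l) /\
     (forall s, s.+1 < #|A| -> ordq q (w s) (w s.+1)).
Variable C : {set 'I_N}.
Hypothesis HCc : #|C| = kA.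
Hypothesis HCi : forall q q', q \in C -> q' \in C -> q' \in Xf q -> q' = q.

Definition Lp := enum (pi @: C).
Lemma size_Lp : size Lp = kA.
Proof. by rewrite /Lp -cardE card_imset //; exact: pi_inj. Qed.

Definition phi (j : 'I_kA) : 'I_kB := nth (pi q0) Lp j.

Lemma phi_mon (i j : 'I_kA) : i < j -> phi i < phi j.
Proof.
move=> H.
have tr : transitive (fun a b : 'I_kB => a < b) by move=> a b c; exact: ltn_trans.
have Hs := sorted_ltn_nth tr (pi q0) (sorted_enum_ord (pi @: C)).
apply: Hs => //; rewrite unfold_in /= size_Lp //.
Qed.

Lemma phi_in j : phi j \in pi @: C.
Proof. by rewrite -mem_enum; apply: mem_nth; rewrite size_Lp. Qed.

Definition c j : 'I_N := odflt q0 [pick q in C | pi q == phi j].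

Lemma c_spec j : c j \in C /\ pi (c j) = phi j.
Proof.
rewrite /c; case: pickP => [q /andP[qC /eqP H]|H] //=.
case/imsetP: (phi_in j) => q qC Hq.
by move: (H q); rewrite qC Hq eqxx.
Qed.

Lemma phi_inj : injective phi.
Proof.
move=> i j H; apply/val_inj; case: (ltngtP i j) => [/phi_mon|/phi_mon|] //; by rewrite H ltnn.
Qed.

Lemma c_inj : injective c.
Proof.
move=> i j H; apply: phi_inj; by rewrite -(c_spec i).2 -(c_spec j).2 H.
Qed.

Definition part (j : 'I_kA) := [set x | pA x == j].
Definition rk x := rank LA (part (pA x)) x.

Lemma in_part x : x \in part (pA x).
Proof. by rewrite inE. Qed.

Lemma rk_lt x : rk x < #|A|.
Proof.
apply: leq_trans (rank_bound (a_lin HA) (in_part x)) _; exact: max_card.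
Qed.

Lemma LA_rk x u : pA x = pA u -> LA x u = (rk x < rk u).
Proof.
move=> H; have xP := in_part x; have uP : u \in part (pA x) by rewrite H in_part.
rewrite /rk -H; apply/idP/idP => [Hl|Hr]; first exact: (rank_lt (a_lin HA) xP Hl).
exact: (rank_ord (a_lin HA) xP uP Hr).
Qed.

Lemma rk_inj x u : pA x = pA u -> rk x = rk u -> x = u.
Proof.
move=> H; have xP := in_part x; have uP : u \in part (pA x) by rewrite H in_part.
rewrite /rk -H => Hr; exact: (rank_inj (a_lin HA) xP uP Hr).
Qed.

Definition Tt (j : 'I_kA) (s : nat) (l : 'I_N) : bool :=
  [exists x, (pA x == j) && (rk x == s) &&
     [exists i, (c i == l) && (rhoA i x (+) e (c j) l)]].

Lemma Tt_spec x i : Tt (pA x) (rk x) (c i) = rhoA i x (+) e (c (pA x)) (c i).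
Proof.
apply/existsP/idP => [[x' /andP[/andP[/eqP H1 /eqP H2] /existsP [i' /andP[/eqP H3 H4]]]]|H].
  have Hx := rk_inj H1 H2; have Hi := c_inj H3.
  by subst x' i'.
exists x; rewrite !eqxx /=; apply/existsP; exists i; by rewrite eqxx.
Qed.

Lemma wex j : exists w : nat -> V,
  (forall s, s < #|A| -> forall l, l \in C :\ c j -> w s l = Tt j s l) /\
  (forall s, s.+1 < #|A| -> ordq (c j) (w s) (w s.+1)).
Proof.
have JX : C :\ c j \subset [set: 'I_N] :\: Xf (c j).
  apply/subsetP => l; rewrite !inE andbT => /andP[nl lC]; apply/negP => lX.
  by move: nl; rewrite (HCi (c_spec j).1 lC lX) eqxx.
have JR : #|C :\ c j| <= #|A|.
  apply: leq_trans HkA; rewrite -HCc; apply: subset_leq_card; exact: subD1set.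
have [w [H1 H2]] := HXf JX JR (Tt j).
exists w; split => // s hs l hl; by have [_ ->] := H1 s hs.
Qed.

Variable wf : 'I_kA -> nat -> V.
Hypothesis Hwf : forall j,
  (forall s, s < #|A| -> forall l, l \in C :\ c j -> wf j s l = Tt j s l) /\
  (forall s, s.+1 < #|A| -> ordq (c j) (wf j s) (wf j s.+1)).

Definition g (x : A) : BT N := (c (pA x), wf (pA x) (rk x)).

Lemma wf_ord j s s' : s < #|A| -> s' < #|A| -> ordq (c j) (wf j s) (wf j s') = (s < s').
Proof. move=> hs hs'; exact: (chain_ord (ordq_lin (c j)) (Hwf j).2 hs hs'). Qed.

Lemma main_embed : embeds_star EA RA LA (@EBr N) RB LB.
Proof.
apply: (embed_abs HA HB (g := g) (phi := phi)).
- move=> x u; rewrite /g => Hg; case: Hg => /c_inj H1 H2.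
  have H1' := H1; rewrite H1 in H2; apply: (rk_inj H1').
  case: (ltngtP (rk x) (rk u)) => // H.
    by have := wf_ord (pA u) (rk_lt x) (rk_lt u); rewrite H2 H (negbTE (ord_irr (ordq_lin _) _)).
  by have := wf_ord (pA u) (rk_lt u) (rk_lt x); rewrite H2 H (negbTE (ord_irr (ordq_lin _) _)).
- exact: phi_mon.
- by move=> x; rewrite /g pB_q (c_spec _).2.
- move=> x l nl; rewrite /g -(c_spec l).2 rhoB_q; last by rewrite (inj_eq c_inj) eq_sym.
  rewrite (Hwf _).1; first by rewrite Tt_spec addbK.
    exact: rk_lt.
  by rewrite !inE (inj_eq c_inj) nl (c_spec l).1.
- move=> x u H; rewrite /g (LA_rk H) -H.
  by rewrite -[LB _ _]/(ordq _ _ _) wf_ord // rk_lt.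
Qed.
End Main.

Theorem mainTheorem20 : expansion_property_S.
Proof.
move=> A EA HAS.
pose N := #|A|.+1 * (xf #|A| #|A|).*2.+1.
exists (BT N), (@EBr N); split; first exact: inS_EB.
move=> RA LA RB LB HA HB.
have [pA [rhoA HAa]] := abs_of_star HA.
have [pB [rhoB HBa]] := abs_of_star HB.
have HkA : nparts EA <= #|A|.
  rewrite /nparts; apply: leq_trans (leq_imset_card _ _) _; exact: max_card.
have HN : #|A|.+1 * (xf #|A| #|A|).*2.+1 <= N by [].
have [Xf HXf] := fin_all_exists (Xex HkA HN HBa).
have HU : nparts EA * (xf #|A| #|A|).*2.+1 <= #|[set: 'I_N]|.
  rewrite cardsT card_ord; apply: leq_trans HN; rewrite leq_mul2r; apply/orP; right.
  exact: leq_trans HkA (leqnSn _).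
have [C [_ HCc HCi]] := indep (fun q => (HXf q).1) HU.
have [wf Hwf] := fin_all_exists (wex LA pA rhoA HkA HN HBa (fun q => (HXf q).2) HCc HCi).
exact: (main_embed HAa HBa HCc Hwf).
Qed.
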